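(* Let $V=V(\alpha_1)\otimes\cdots\otimes V(\alpha_d)$ be a standard $U_q(\widehat{\mathfrak{sl}}_2)$-module with feasible diameter $d$. Then its Drinfel'd polynomial satisfies $$P_V=\prod_{i=1}^d P_{V(\alpha_i)}.$$
   Context: Let $\mathbb F$ be an algebraically closed field and fix nonzero $q\in\mathbb F$ with $q^2\ne1$; write $[n]_q=(q^n-q^{-n})/(q-q^{-1})$. $U_q(\widehat{\mathfrak{sl}}_2)$ is the associative unital $\mathbb F$-algebra with generators $e_i^{\pm},K_i^{\pm1}$ ($i\in\{0,1\}$) and relations $K_iK_i^{-1}=K_i^{-1}K_i=1$, $K_0K_1=K_1K_0$, $K_ie_i^{\pm}K_i^{-1}=q^{\pm2}e_i^{\pm}$, $K_ie_j^{\pm}K_i^{-1}=q^{\mp2}e_j^{\pm}$ ($i\ne j$), $e_i^+e_i^--e_i^-e_i^+=(K_i-K_i^{-1})/(q-q^{-1})$, $e_0^{\pm}e_1^{\mp}=e_1^{\mp}e_0^{\pm}$, and $(e_i^\pm)^3e_j^\pm-[3]_q(e_i^\pm)^2e_j^\pm e_i^\pm+[3]_qe_i^\pm e_j^\pm(e_i^\pm)^2-e_j^\pm(e_i^\pm)^3=0$ ($i\ne j$). Tensor products of modules are formed via $e_i^+(v\otimes w)=e_i^+v\otimes K_iw+v\otimes e_i^+w$, $e_i^-(v\otimes w)=e_i^-v\otimes w+K_i^{-1}v\otimes e_i^-w$, $K_i(v\otimes w)=K_iv\otimes K_iw$. For nonzero $\alpha\in\mathbb F$, $V(\alpha)$ is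 the module with basis $x,y$ and $K_1x=qx$, $K_1y=q^{-1}y$, $e_1^-x=y$, $e_1^-y=0$, $e_1^+x=0$, $e_1^+y=x$, $K_0x=q^{-1}x$, $K_0y=qy$, $e_0^-x=0$, $e_0^-y=q\alpha^{-1}x$, $e_0^+x=q^{-1}\alpha y$, $e_0^+y=0$. A standard module of diameter $d$ is $V(\alpha_1)\otimes\cdots\otimes V(\alpha_d)$ with all $\alpha_i\in\mathbb F$ nonzero (for $d=0$: the trivial module, on which each $e_i^\pm$ acts as $0$ and each $K_i^{\pm1}$ as $1$). An integer $d$ is feasible if $d\ge0$ and $q^{2i}\ne1$ for $1\le i\le d$. For a standard $V$ of diameter $d$, $U_0$ is the $1$-dimensional span of $x\otimes\cdots\otimes x$. Fix nonzero $b,c,b^*,c^*\in\mathbb F$ and $u,v,u^*,v^*\in\mathbb F$ with $uv^*=-bb^*q^{-1}(q-q^{-1})^2$ and $vu^*=-cc^*q^{-1}(q-q^{-1})^2$; set $R=ue_0^++ve_1^-K_1$ and $L=u^*e_1^++v^*e_0^-K_0$. For a standard module $V$ of feasible diameter $d$ and $0\le i\le d$, $\zeta_i$ is the scalar by which $L^iR^i$ acts on $U_0$, and $\sigma_i=\zeta_i/\prod_{k=1}^i(q^k-q^{-k})^2$. For $i\ge0$ let $f_i=bb^*q^{-2i}+cc^*q^{2i}-\lambda\in\mathbb F[\lambda]$. The Drinfel'd polynomial of $V$ is the monic degree-$d$ polynomial $P_V=(-1)^d\sum_{i=0}^d\sigma_{d-i}f_0f_1\cdots f_{i-1}$. *)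

(* Defs.v *)
From HB Require Import structures.
From mathcomp Require Import all_boot all_order all_algebra.
Set Implicit Arguments. Unset Strict Implicit. Unset Printing Implicit Defensive.
Import Order.TTheory GRing.Theory Num.Theory.
Local Open Scope ring_scope.

Section Uqsl2.
Variable F : closedFieldType.

(* Generators of U_q(sl2^): K_i, K_i^{-1}, e_i^+, e_i^- for i in {0,1}. *)
Inductive gen := K0 | K1 | K0i | K1i | E0p | E0m | E1p | E1m.

Fixpoint dimV (d : nat) : nat := if d is d'.+1 then (dimV d' + dimV d')%N else 1%N.

(* Kronecker product of a 2x2 matrix with an n x n matrix; the basis of
   V(a) (x) W is ordered as (x (x) W, y (x) W).  Column convention:
   (A (x) B) (e_j (x) w) = sum_i A i j e_i (x) B w. *)
Definition kron2 n (A : 'M[F]_2) (B : 'M[F]_n) : 'M[F]_(n + n) :=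
  block_mx (A 0 0 *: B) (A 0 1 *: B) (A 1 0 *: B) (A 1 1 *: B).

(* Matrix (in the basis x = index 0, y = index 1) of a generator on V(alpha),
   acting on column vectors. *)
Definition baseV (q alpha : F) (g : gen) : 'M[F]_2 :=
  \matrix_(i < 2, j < 2)
   match g with
   | K1  => if (i == 0) && (j == 0) then q else if (i == 1) && (j == 1) then q^-1 else 0
   | K1i => if (i == 0) && (j == 0) then q^-1 else if (i == 1) && (j == 1) then q else 0
   | K0  => if (i == 0) && (j == 0) then q^-1 else if (i == 1) && (j == 1) then q else 0
   | K0i => if (i == 0) && (j == 0) then q else if (i == 1) && (j == 1) then q^-1 else 0
   | E1m => if (i == 1) && (j == 0) then 1 else 0            (* e1^- x = y *)
   | E1p => if (i == 0) && (j == 1) then 1 else 0            (* e1^+ y = x *)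
   | E0m => if (i == 0) && (j == 1) then q / alpha else 0    (* e0^- y = q a^-1 x *)
   | E0p => if (i == 1) && (j == 0) then alpha / q else 0    (* e0^+ x = q^-1 a y *)
   end.

(* Action of the generators on the standard module
   V(a_1) (x) (V(a_2) (x) ( ... (x) V(a_d))), via the given coproduct. *)
Fixpoint stdact (q : F) (s : seq F) (g : gen) {struct s} : 'M[F]_(dimV (size s)) :=
  match s return 'M[F]_(dimV (size s)) with
  | [::] => match g with K0 | K1 | K0i | K1i => 1%:M | _ => 0 end
  | a :: s' =>
    let A := baseV q a in
    let B := stdact q s' in
    match g with
    | K0 => kron2 (A K0) (B K0)
    | K1 => kron2 (A K1) (B K1)
    | K0i => kron2 (A K0i) (B K0i)
    | K1i => kron2 (A K1i) (B K1i)
    | E0p => kron2 (A E0p) (B K0) + kron2 1%:M (B E0p)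
    | E1p => kron2 (A E1p) (B K1) + kron2 1%:M (B E1p)
    | E0m => kron2 (A E0m) 1%:M + kron2 (A K0i) (B E0m)
    | E1m => kron2 (A E1m) 1%:M + kron2 (A K1i) (B E1m)
    end
  end.

(* The vector x (x) ... (x) x spanning U_0. *)
Fixpoint u0vec (d : nat) : 'cV[F]_(dimV d) :=
  match d return 'cV[F]_(dimV d) with
  | 0 => 1%:M
  | d'.+1 => col_mx (u0vec d') 0
  end.

Definition Rop (q u v : F) (s : seq F) : 'M[F]_(dimV (size s)) :=
  u *: stdact q s E0p + v *: (stdact q s E1m *m stdact q s K1).
Definition Lop (q us vs : F) (s : seq F) : 'M[F]_(dimV (size s)) :=
  us *: stdact q s E1p + vs *: (stdact q s E0m *m stdact q s K0).

(* zeta_i: the scalar by which L^i R^i acts on U_0 = span(u0), i.e. the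
   coefficient of u0 in L^i R^i u0 (u0 is a standard basis vector). *)
Definition zeta (q u v us vs : F) (s : seq F) (i : nat) : F :=
  ((u0vec (size s))^T *m
     iter i (mulmx (Lop q us vs s)) (iter i (mulmx (Rop q u v s)) (u0vec (size s)))) 0 0.

Definition sigma (q u v us vs : F) (s : seq F) (i : nat) : F :=
  zeta q u v us vs s i / \prod_(k < i) (q ^+ k.+1 - q ^- k.+1) ^+ 2.

Definition fpol (q b c bs cs : F) (i : nat) : {poly F} :=
  (b * bs * q ^- (2 * i) + c * cs * q ^+ (2 * i))%:P - 'X.

Definition drinfeld (q b c bs cs u v us vs : F) (s : seq F) : {poly F} :=
  (-1) ^+ size s *
  \sum_(i < (size s).+1)
     (sigma q u v us vs s (size s - i))%:P * \prod_(j < i) fpol q b c bs cs j.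

Definition feasible (q : F) (d : nat) : Prop :=
  forall i : nat, (1 <= i <= d)%N -> q ^+ (2 * i) != 1.

End Uqsl2.

(* Main.v *)
Require Import Defs.
From HB Require Import structures.
From mathcomp Require Import all_boot all_order all_algebra.
From Stdlib Require Import Ring Field.
Import Order.TTheory GRing.Theory Num.Theory.
Local Open Scope ring_scope.
Set Implicit Arguments. Unset Strict Implicit.

Section Dev.
Variable F : closedFieldType.
Notation K := (GRing.PzSemiRing.sort (GRing_ClosedField__to__GRing_PzSemiRing F)).
Notation cadd := (@Algebra.add (GRing_ClosedField__to__Algebra_BaseAddMagma F)).
Notation copp := (@Algebra.opp (GRing_ClosedField__to__Algebra_BaseZmodule F)).
Notation czero := (@Algebra.zero (GRing_ClosedField__to__Algebra_BaseAddUMagma F)).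
Notation cmul := (@GRing.mul (GRing_ClosedField__to__GRing_PzSemiRing F)).
Notation cone := (@GRing.one (GRing_ClosedField__to__GRing_PzSemiRing F)).
Notation cinv := (@GRing.inv (GRing_ClosedField__to__GRing_UnitRing F)).
Notation cexp := (@GRing.exp (GRing_ClosedField__to__GRing_PzSemiRing F)).
Lemma RT : @ring_theory K czero cone cadd cmul (fun x y => cadd x (copp y)) copp eq.
Proof. split=> //=; [exact: add0r|exact: addrC|exact: addrA|exact: mul1r|exact: mulrC|exact: mulrA|exact: mulrDl|exact: subrr]. Qed.
Lemma FT : @field_theory K czero cone cadd cmul (fun x y => cadd x (copp y)) copp (fun x y => cmul x (cinv y)) cinv eq.
Proof. split=> //=; [exact: RT| exact/eqP/oner_neq0 | move=> p Hp; by rewrite mulVf //; exact/eqP]. Qed.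
Add Field Ff : FT.
Ltac canon :=
  repeat match goal with
  | |- context [@Algebra.add ?X] => tryif constr_eq X (GRing_ClosedField__to__Algebra_BaseAddMagma F) then fail else change (@Algebra.add X) with cadd
  | |- context [@Algebra.opp ?X] => tryif constr_eq X (GRing_ClosedField__to__Algebra_BaseZmodule F) then fail else change (@Algebra.opp X) with copp
  | |- context [@Algebra.zero ?X] => tryif constr_eq X (GRing_ClosedField__to__Algebra_BaseAddUMagma F) then fail else change (@Algebra.zero X) with czero
  | |- context [@GRing.mul ?X] => tryif constr_eq X (GRing_ClosedField__to__GRing_PzSemiRing F) then fail else change (@GRing.mul X) with cmul
  | |- context [@GRing.one ?X] => tryif constr_eq X (GRing_ClosedField__to__GRing_PzSemiRing F) then fail else change (@GRing.one X) with cone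
  | |- context [@GRing.inv ?X] => tryif constr_eq X (GRing_ClosedField__to__GRing_UnitRing F) then fail else change (@GRing.inv X) with cinv
  | |- context [@GRing.exp ?X] => tryif constr_eq X (GRing_ClosedField__to__GRing_PzSemiRing F) then fail else change (@GRing.exp X) with cexp
  | |- @eq ?T ?x ?y => tryif constr_eq T (GRing.PzSemiRing.sort (GRing_ClosedField__to__GRing_PzSemiRing F)) then fail else change (@eq (GRing.PzSemiRing.sort (GRing_ClosedField__to__GRing_PzSemiRing F)) x y)
  end.
Ltac fld := rewrite -[LHS]mulr1 -[RHS]mulr1; canon; field.
Ltac rng := rewrite -[LHS]mulr1 -[RHS]mulr1; canon; ring.
Lemma testf (a b : F) (hb : b != 0) : (a - b) * b^-1 * a = a * a / b - a.
Proof. fld. by apply/eqP. Qed.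

Variable q : F.
Hypothesis hq : q != 0.
Notation Km s := (stdact q s K1).
Notation K0m s := (stdact q s K0).

Lemma K1_cons a s : stdact q (a :: s) K1 = block_mx (q *: Km s) 0 0 (q^-1 *: Km s).
Proof. by rewrite /= /kron2 !mxE /= !scale0r. Qed.
Lemma K0_cons a s : stdact q (a :: s) K0 = block_mx (q^-1 *: K0m s) 0 0 (q *: K0m s).
Proof. by rewrite /= /kron2 !mxE /= !scale0r. Qed.

Lemma Rop_cons u v a s : Rop q u v (a :: s) =
  block_mx (Rop q u v s) 0 ((u * (a / q)) *: K0m s + (v * q) *: Km s) (Rop q u v s).
Proof.
rewrite /Rop /= /kron2 !mxE /= !scale0r !scale1r.
rewrite !add_block_mx mulmx_block !scale_block_mx !add_block_mx ?mul0mx ?mulmx0 ?add0r ?addr0 ?mul1mx; congr block_mx.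
all: rewrite -?scalemxAl -?scalemxAr ?scalerA ?scaler0 ?addr0 ?add0r.
all: by rewrite ?divfK ?mulfK ?mul0mx ?scaler0.
Qed.

Lemma Lop_cons us vs a s : Lop q us vs (a :: s) =
  block_mx (Lop q us vs s) (us *: Km s + (vs * (q / a * q)) *: K0m s) 0 (Lop q us vs s).
Proof.
rewrite /Lop /= /kron2 !mxE /= !scale0r !scale1r.
rewrite !add_block_mx mulmx_block !scale_block_mx !add_block_mx ?mul0mx ?mulmx0 ?add0r ?addr0 ?mul1mx; congr block_mx.
all: rewrite -?scalemxAl -?scalemxAr ?scalerA ?scaler0 ?addr0 ?add0r.
all: by rewrite ?divfK ?mulfK ?mul0mx ?mul1mx ?scaler0 ?mulrA.
Qed.

Lemma Rop_nil u v : Rop q u v [::] = 0.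
Proof. by rewrite /Rop /= scaler0 mul0mx scaler0 addr0. Qed.
Lemma Lop_nil u v : Lop q u v [::] = 0.
Proof. by rewrite /Lop /= scaler0 mul0mx scaler0 addr0. Qed.

Lemma KK s : K0m s *m Km s = 1%:M /\ Km s *m K0m s = 1%:M.
Proof.
elim: s => [|a s [IH1 IH2]]; first by rewrite /= mulmx1.
rewrite K0_cons K1_cons !mulmx_block !mulmx0 !mul0mx !addr0 !add0r.
rewrite -!scalemxAl -!scalemxAr !scalerA IH1 IH2 mulVf // mulfV // !scale1r.
by rewrite [RHS]scalar_mx_block.
Qed.

Lemma K1_comm s x y : Km s *m (x *: K0m s + y *: Km s) = (x *: K0m s + y *: Km s) *m Km s.
Proof.
have [h1 h2] := KK s.
by rewrite mulmxDr mulmxDl -!scalemxAr -!scalemxAl h1 h2.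
Qed.
Lemma K0_comm s x y : K0m s *m (x *: K0m s + y *: Km s) = (x *: K0m s + y *: Km s) *m K0m s.
Proof.
have [h1 h2] := KK s.
by rewrite mulmxDr mulmxDl -!scalemxAr -!scalemxAl h1 h2.
Qed.

Lemma KR u v s : Km s *m Rop q u v s = (q^-1 * q^-1) *: (Rop q u v s *m Km s).
Proof.
elim: s => [|a s IH]; first by rewrite Rop_nil mulmx0 mul0mx scaler0.
rewrite K1_cons Rop_cons !mulmx_block !mulmx0 !mul0mx !addr0 !add0r scale_block_mx scaler0.
congr block_mx; rewrite -!scalemxAl -!scalemxAr ?IH ?K1_comm !scalerA; congr (_ *: _ ); fld; exact/eqP.
Qed.
Lemma K0R u v s : K0m s *m Rop q u v s = (q * q) *: (Rop q u v s *m K0m s).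
Proof.
elim: s => [|a s IH]; first by rewrite Rop_nil mulmx0 mul0mx scaler0.
rewrite K0_cons Rop_cons !mulmx_block !mulmx0 !mul0mx !addr0 !add0r scale_block_mx scaler0.
congr block_mx; rewrite -!scalemxAl -!scalemxAr ?IH ?K0_comm !scalerA; congr (_ *: _ ); fld; exact/eqP.
Qed.
Lemma KL u v s : Km s *m Lop q u v s = (q * q) *: (Lop q u v s *m Km s).
Proof.
elim: s => [|a s IH]; first by rewrite Lop_nil mulmx0 mul0mx scaler0.
rewrite K1_cons Lop_cons !mulmx_block !mulmx0 !mul0mx !addr0 !add0r scale_block_mx scaler0.
have e : forall (x y : F), Km s *m (x *: Km s + y *: K0m s) = (x *: Km s + y *: K0m s) *m Km s.
  by move=> x y; rewrite addrC K1_comm addrC.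
congr block_mx; rewrite -!scalemxAl -!scalemxAr ?IH ?e !scalerA; congr (_ *: _ ); fld; exact/eqP.
Qed.
Lemma K0L u v s : K0m s *m Lop q u v s = (q^-1 * q^-1) *: (Lop q u v s *m K0m s).
Proof.
elim: s => [|a s IH]; first by rewrite Lop_nil mulmx0 mul0mx scaler0.
rewrite K0_cons Lop_cons !mulmx_block !mulmx0 !mul0mx !addr0 !add0r scale_block_mx scaler0.
have e : forall (x y : F), K0m s *m (x *: Km s + y *: K0m s) = (x *: Km s + y *: K0m s) *m K0m s.
  by move=> x y; rewrite addrC K0_comm addrC.
congr block_mx; rewrite -!scalemxAl -!scalemxAr ?IH ?e !scalerA; congr (_ *: _ ); fld; exact/eqP.
Qed.

Notation u0 s := (u0vec F (size s)).

Lemma u0K1 s : Km s *m u0 s = q^+(size s) *: u0 s.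
Proof.
elim: s => [|a s IH]; first by rewrite /= mul1mx expr0 scale1r.
rewrite K1_cons /= mul_block_col !mulmx0 !addr0 mul0mx -scalemxAl IH scalerA scale_col_mx scaler0 exprS.
by [].
Qed.
Lemma u0K0 s : K0m s *m u0 s = q^-1^+(size s) *: u0 s.
Proof.
elim: s => [|a s IH]; first by rewrite /= mul1mx expr0 scale1r.
rewrite K0_cons /= mul_block_col !mulmx0 !addr0 mul0mx -scalemxAl IH scalerA scale_col_mx scaler0 exprS.
by [].
Qed.

Lemma iter_comm n (N M : 'M[F]_n) c (w : 'cV[F]_n) k :
  N *m M = c *: (M *m N) -> N *m iter k (mulmx M) w = c^+k *: iter k (mulmx M) (N *m w).
Proof.
move=> h; elim: k => [|k IH]; first by rewrite expr0 scale1r.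
by rewrite !iterS mulmxA h -scalemxAl -mulmxA IH -scalemxAr scalerA exprS.
Qed.

Lemma iter_scale n (M : 'M[F]_n) c (w : 'cV[F]_n) k :
  iter k (mulmx M) (c *: w) = c *: iter k (mulmx M) w.
Proof. by elim: k => [|k IH] //; rewrite !iterS IH scalemxAr. Qed.

Lemma ER1 u v s k : Km s *m iter k (mulmx (Rop q u v s)) (u0 s)
  = ((q^-1*q^-1)^+k * q^+(size s)) *: iter k (mulmx (Rop q u v s)) (u0 s).
Proof. by rewrite (iter_comm _ _ (KR u v s)) u0K1 iter_scale scalerA. Qed.
Lemma ER0 u v s k : K0m s *m iter k (mulmx (Rop q u v s)) (u0 s)
  = ((q*q)^+k * q^-1^+(size s)) *: iter k (mulmx (Rop q u v s)) (u0 s).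
Proof. by rewrite (iter_comm _ _ (K0R u v s)) u0K0 iter_scale scalerA. Qed.
Lemma EL1 u v us vs s j t :
  Km s *m iter t (mulmx (Lop q us vs s)) (iter j (mulmx (Rop q u v s)) (u0 s))
  = ((q*q)^+t * ((q^-1*q^-1)^+j * q^+(size s))) *:
     iter t (mulmx (Lop q us vs s)) (iter j (mulmx (Rop q u v s)) (u0 s)).
Proof. by rewrite (iter_comm _ _ (KL us vs s)) ER1 iter_scale scalerA. Qed.
Lemma EL0 u v us vs s j t :
  K0m s *m iter t (mulmx (Lop q us vs s)) (iter j (mulmx (Rop q u v s)) (u0 s))
  = ((q^-1*q^-1)^+t * ((q*q)^+j * q^-1^+(size s))) *:
     iter t (mulmx (Lop q us vs s)) (iter j (mulmx (Rop q u v s)) (u0 s)).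
Proof. by rewrite (iter_comm _ _ (K0L us vs s)) ER0 iter_scale scalerA. Qed.

Lemma iterR n (X Y : 'M[F]_n) (w : 'cV[F]_n) (phi : nat -> F) :
  (forall k, Y *m iter k (mulmx X) w = phi k *: iter k (mulmx X) w) ->
  forall j, iter j.+1 (mulmx (block_mx X 0 Y X)) (col_mx w 0) =
   col_mx (iter j.+1 (mulmx X) w) ((\sum_(k < j.+1) phi k) *: iter j (mulmx X) w).
Proof.
move=> h; elim=> [|j IH].
  have h0 := h 0%N; rewrite /= in h0.
  by rewrite /= mul_block_col !mulmx0 !addr0 big_ord1 h0.
rewrite iterS IH mul_block_col mul0mx addr0 (h j.+1) -scalemxAr.
by rewrite (big_ord_recr j.+1) !iterS /= scalerDl addrC.
Qed.

Lemma iterL n (X Z : 'M[F]_n) (p r : 'cV[F]_n) (psi : nat -> F) :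
  (forall t, Z *m iter t (mulmx X) r = psi t *: iter t (mulmx X) r) ->
  forall j, iter j.+1 (mulmx (block_mx X Z 0 X)) (col_mx p r) =
   col_mx (iter j.+1 (mulmx X) p + (\sum_(t < j.+1) psi t) *: iter j (mulmx X) r)
          (iter j.+1 (mulmx X) r).
Proof.
move=> h; elim=> [|j IH].
  have h0 := h 0%N; rewrite /= in h0.
  by rewrite /= mul_block_col !mul0mx !add0r big_ord1 h0.
rewrite iterS IH mul_block_col mul0mx add0r (h j.+1) mulmxDr -scalemxAr.
by rewrite (big_ord_recr j.+1) !iterS /= scalerDl addrA.
Qed.

Definition phiR (u v a : F) (s : seq F) (k : nat) : F :=
  u * (a / q) * ((q*q)^+k * q^-1^+(size s)) + v * q * ((q^-1*q^-1)^+k * q^+(size s)).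
Definition psiL (us vs a : F) (s : seq F) (j t : nat) : F :=
  us * ((q*q)^+t * ((q^-1*q^-1)^+j * q^+(size s)))
  + vs * (q / a * q) * ((q^-1*q^-1)^+t * ((q*q)^+j * q^-1^+(size s))).

Lemma zeta_cons u v us vs a s j :
  zeta q u v us vs (a :: s) j.+1 = zeta q u v us vs s j.+1
   + (\sum_(k < j.+1) phiR u v a s k) * (\sum_(t < j.+1) psiL us vs a s j t) * zeta q u v us vs s j.
Proof.
rewrite /zeta Rop_cons Lop_cons.
change (u0vec F (size (a :: s))) with (col_mx (u0vec F (size s)) (0 : 'cV[F]_(dimV (size s)))).
rewrite (@iterR _ _ _ _ (phiR u v a s)); last first.
  by move=> k; rewrite mulmxDl -!scalemxAl ER0 ER1 !scalerA -scalerDl.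
rewrite (@iterL _ _ _ _ _ (psiL us vs a s j)); last first.
  move=> t; rewrite iter_scale -scalemxAr mulmxDl -!scalemxAl EL1 EL0 !scalerA -scalerDl.
  by rewrite scalerA mulrC -scalerA.
rewrite tr_col_mx trmx0 mul_row_col mul0mx addr0 mulmxDr iter_scale -!scalemxAr !scalerA.
by rewrite !mxE (mulrC (\sum_(t < j.+1) psiL us vs a s j t)).
Qed.

Lemma nilR u v s : iter (size s).+1 (mulmx (Rop q u v s)) (u0 s) = 0.
Proof.
elim: s => [|a s IH]; first by rewrite /= Rop_nil mul0mx.
rewrite Rop_cons.
change (u0vec F (size (a :: s))) with (col_mx (u0vec F (size s)) (0 : 'cV[F]_(dimV (size s)))).
rewrite (@iterR _ _ _ _ (phiR u v a s)); last first.
  by move=> k; rewrite mulmxDl -!scalemxAl ER0 ER1 !scalerA -scalerDl.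
change (size (a :: s)) with (size s).+1.
by rewrite iterS IH mulmx0 scaler0 col_mx0.
Qed.

Lemma iter0v n (M : 'M[F]_n) k : iter k (mulmx M) (0 : 'cV[F]_n) = 0.
Proof. by elim: k => [|k IH] //; rewrite iterS IH mulmx0. Qed.

Lemma zeta_nil u v us vs s : zeta q u v us vs s (size s).+1 = 0.
Proof. by rewrite /zeta nilR iter0v mulmx0 mxE. Qed.

Lemma zeta0_cons u v us vs a s : zeta q u v us vs (a :: s) 0 = zeta q u v us vs s 0.
Proof.
rewrite /zeta /=.
by rewrite tr_col_mx trmx0 mul_row_col mul0mx addr0.
Qed.

Lemma zeta0_nil u v us vs : zeta q u v us vs [::] 0 = 1.
Proof. by rewrite /zeta /= trmx1 mulmx1 mxE. Qed.

Lemma geom (x : F) n : (x - 1) * \sum_(k < n) x ^+ k = x ^+ n - 1.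
Proof.
elim: n => [|n IH]; first by rewrite big_ord0 mulr0 expr0 subrr.
rewrite big_ord_recr /= mulrDr IH exprS; rng.
Qed.

Lemma geomE (x : F) n : x != 1 -> \sum_(k < n) x ^+ k = (x ^+ n - 1) / (x - 1).
Proof.
move=> hx; have hx1 : x - 1 != 0 by rewrite subr_eq0.
by rewrite -geom [(x - 1) * _]mulrC mulfK.
Qed.

Variables b bs c cs u v us vs : F.
Hypotheses (hb : b != 0) (hc : c != 0) (hbs : bs != 0) (hcs : cs != 0).
Hypothesis hq2 : q ^+ 2 != 1.
Hypothesis huvs : u * vs = - (b * bs * q^-1 * (q - q^-1) ^+ 2).
Hypothesis hvus : v * us = - (c * cs * q^-1 * (q - q^-1) ^+ 2).

Definition rho (a : F) := (u*us*a/q + v*vs*(q*q*q)/a) / ((q - q^-1)*(q - q^-1)).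
Definition ccoef (a : F) (D n : nat) := rho a - b*bs*(q^+n*q^+n)/(q*q*(q^+D*q^+D))
   - c*cs*(q*q*(q^+D*q^+D))/(q^+n*q^+n).

Lemma hqq : q * q - 1 != 0.
Proof. by rewrite subr_eq0 -expr2. Qed.
Lemma hqi : q^-1 * q^-1 - 1 != 0.
Proof.
rewrite subr_eq0 -expr2 exprVn; apply/negP=> /eqP h.
by move: hq2; rewrite -[q^+2]invrK h invr1 eqxx.
Qed.
Lemma hqm : q - q^-1 != 0.
Proof.
apply/negP=> /eqP h; move: hqq; rewrite subr_eq0.
have -> : q * q = q * q^-1 + q * (q - q^-1) by rewrite -mulrDr addrC subrK.
by rewrite h mulr0 addr0 mulfV // eqxx.
Qed.
Lemma hu : u != 0.
Proof.
apply/negP=> /eqP h.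
have hn : b * bs * q^-1 * (q - q^-1) ^+ 2 != 0 by apply: mulf_neq0; [apply: mulf_neq0; [exact: mulf_neq0 | by rewrite invr_eq0] | exact: expf_neq0 hqm].
move: huvs; rewrite h mul0r => /esym/eqP; rewrite oppr_eq0 => /eqP e.
by move: hn; rewrite e eqxx.
Qed.
Lemma hv : v != 0.
Proof.
apply/negP=> /eqP h.
have hn : c * cs * q^-1 * (q - q^-1) ^+ 2 != 0 by apply: mulf_neq0; [apply: mulf_neq0; [exact: mulf_neq0 | by rewrite invr_eq0] | exact: expf_neq0 hqm].
move: hvus; rewrite h mul0r => /esym/eqP; rewrite oppr_eq0 => /eqP e.
by move: hn; rewrite e eqxx.
Qed.

Lemma key a s j : a != 0 ->
  (\sum_(k < j.+1) phiR u v a s k) * (\sum_(t < j.+1) psiL us vs a s j t)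
  = (q^+j.+1 - q^-j.+1)^+2 * ccoef a (size s) j.+1.
Proof.
move=> ha.
have hqq1 : q * q != 1 by rewrite -subr_eq0 hqq.
have hqi1 : q^-1 * q^-1 != 1 by rewrite -subr_eq0 hqi.
rewrite /phiR /psiL !big_split /= -!mulrA -!mulr_sumr -!mulr_suml !geomE //.
have evs : vs = - (b * bs * q^-1 * (q - q^-1) ^+ 2) / u by rewrite -huvs [u * vs]mulrC mulfK // hu.
have eus : us = - (c * cs * q^-1 * (q - q^-1) ^+ 2) / v by rewrite -hvus [v * us]mulrC mulfK // hv.
rewrite /ccoef /rho evs eus !exprMn !exprVn !exprS !expr0.
have hqj : q ^+ j != 0 by rewrite expf_neq0.
have hqD : q ^+ size s != 0 by rewrite expf_neq0.
move: hqq hqi hqm (hu) (hv); set A := q ^+ j; set Z := q ^+ size s => h1 h2 h3 h4 h5.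
have h6 : 1 + (-1) * (q * q) != 0 by rewrite mulN1r subr_eq0 eq_sym -subr_eq0.
fld; repeat split; apply/eqP;
  first [exact: hqj | exact: hq | exact: hqD | exact: h1 | exact: ha | exact: h4 | exact: h5 | exact: h6 | exact: h2 | exact: h3].
Qed.

Lemma hT n : q ^+ (2 * n) != 1 -> q ^+ n - q ^- n != 0.
Proof.
move=> h; apply/negP=> /eqP e; move: h.
have hn : q ^+ n != 0 by rewrite expf_neq0.
have e' : q ^+ n = q ^- n by apply/eqP; rewrite -subr_eq0 e.
have : q ^+ n * q ^+ n = 1 by rewrite [X in _ * X]e' mulfV.
by rewrite -exprD addnn -mul2n => ->; rewrite eqxx.
Qed.

Lemma sigma_cons a s m : a != 0 -> q ^+ (2 * m.+1) != 1 ->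
  sigma q u v us vs (a :: s) m.+1 =
  sigma q u v us vs s m.+1 + ccoef a (size s) m.+1 * sigma q u v us vs s m.
Proof.
move=> ha hm; have hT' := hT hm.
rewrite /sigma zeta_cons key // big_ord_recr /= invfM.
set P := (\prod_(i < m) _)^-1.
move: hT'; set T := q ^+ m.+1 - q ^- m.+1 => hT'.
fld; apply/eqP; exact: expf_neq0.
Qed.

Lemma sigma0_cons a s : sigma q u v us vs (a :: s) 0 = sigma q u v us vs s 0.
Proof. by rewrite /sigma zeta0_cons. Qed.
Lemma sigma0_nil : sigma q u v us vs [::] 0 = 1.
Proof. by rewrite /sigma zeta0_nil big_ord0 invr1 mulr1. Qed.
Lemma sigma_nil s : sigma q u v us vs s (size s).+1 = 0.
Proof. by rewrite /sigma zeta_nil mul0r. Qed.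

Lemma theta_eq a D i : (i <= D)%N ->
  b * bs * q ^- (2 * i) + c * cs * q ^+ (2 * i) + ccoef a D (D - i).+1 = rho a.
Proof.
move=> hi; rewrite /ccoef.
have eD : q ^+ D = q ^+ (D - i).+1 * q ^+ i / q.
  rewrite -exprD addSn subnK // exprS; fld; exact/eqP.
have h1 : q ^+ (D - i).+1 != 0 by rewrite expf_neq0.
have h2 : q ^+ i != 0 by rewrite expf_neq0.
rewrite eD mul2n -addnn exprD.
move: h1 h2; set X := q ^+ (D - i).+1; set Y := q ^+ i => h1 h2.
fld; repeat split; apply/eqP; first [exact: hq | exact: h1 | exact: h2].
Qed.

Lemma fpol_cc a D i : (i <= D)%N ->
  fpol q b c bs cs i + (ccoef a D (D - i).+1)%:P = (rho a)%:P - 'X.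
Proof.
move=> hi; rewrite /fpol addrAC -polyCD theta_eq //.
Qed.

Notation Fp i := (\prod_(j < i) fpol q b c bs cs j).
Notation sg s m := (sigma q u v us vs s m).

Lemma drinfeld_cons a s : a != 0 -> feasible q (size s).+1 ->
  drinfeld q b c bs cs u v us vs (a :: s) = ('X - (rho a)%:P) * drinfeld q b c bs cs u v us vs s.
Proof.
move=> ha hf; rewrite /drinfeld.
set D := size s.
change (size (a :: s)) with D.+1.
rewrite big_ord_recr /= subnn sigma0_cons.
rewrite (eq_bigr (fun i : 'I_D.+1 => (sg s (D.+1 - i))%:P * Fp i
   + (ccoef a D (D - i).+1 * sg s (D - i))%:P * Fp i)); last first.
  move=> i _; have hi : (i <= D)%N by rewrite -ltnS ltn_ord.
  rewrite /= subSn // sigma_cons //; last first.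
    by apply: hf; rewrite /= ltnS leq_subr.
  by rewrite polyCD mulrDl.
rewrite big_split /= -addrAC.
have E1 : \sum_(i < D.+2) (sg s (D.+1 - i))%:P * Fp i
        = \sum_(i < D.+1) (sg s (D - i))%:P * (Fp i * fpol q b c bs cs i).
  rewrite big_ord_recl subn0 sigma_nil mul0r add0r; apply: eq_bigr => i _.
  by rewrite /= subSS big_ord_recr.
move: E1; rewrite big_ord_recr /= subnn => ->.
rewrite -big_split /=.
rewrite (eq_bigr (fun i : 'I_D.+1 => (sg s (D - i))%:P * Fp i * ((rho a)%:P - 'X))); last first.
  move=> i _; have hi : (i <= D)%N by rewrite -ltnS ltn_ord.
  rewrite -(fpol_cc a hi).
  move: (sg s (D - i)) (Fp i) (fpol q b c bs cs i) (ccoef a D (D - i).+1) => x y z w.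
  rewrite polyCM mulrDr !mulrA; congr (_ + _).
  by rewrite -mulrA mulrC.
rewrite -mulr_suml exprS.
move: ((-1) ^+ D) (\sum_(i < D.+1) _) => e S.
by rewrite mulN1r mulNr -mulrN -mulrN opprB mulrA mulrC.
Qed.

Lemma drinfeld_nil : drinfeld q b c bs cs u v us vs [::] = 1.
Proof. by rewrite /drinfeld /= big_ord1 /= sigma0_nil big_ord0 mulr1 expr0 mul1r. Qed.

Lemma drinfeld_single a : a != 0 -> drinfeld q b c bs cs u v us vs [:: a] = 'X - (rho a)%:P.
Proof.
move=> ha; rewrite drinfeld_cons // ?drinfeld_nil ?mulr1 //.
move=> i /andP [h1 h2]; have -> : i = 1%N by apply/eqP; rewrite eqn_leq h1 h2.
by rewrite muln1.
Qed.

Lemma main_sec s : all (fun a => a != 0) s -> feasible q (size s) ->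
  drinfeld q b c bs cs u v us vs s = \prod_(a <- s) drinfeld q b c bs cs u v us vs [:: a].
Proof.
elim: s => [|a s IH]; first by rewrite big_nil drinfeld_nil.
move=> /= /andP [ha hs] hf.
rewrite big_cons drinfeld_cons // drinfeld_single // IH //.
move=> i /andP [h1 h2]; apply: hf; rewrite h1 /=; exact: leqW.
Qed.
End Dev.

Theorem proposition7p13 (F : closedFieldType) (q b c bs cs u v us vs : F)
  (hq0 : q != 0) (hq2 : q ^+ 2 != 1)
  (hb : b != 0) (hc : c != 0) (hbs : bs != 0) (hcs : cs != 0)
  (huvs : u * vs = - (b * bs * q^-1 * (q - q^-1) ^+ 2))
  (hvus : v * us = - (c * cs * q^-1 * (q - q^-1) ^+ 2))
  (s : seq F) (hs : all (fun a => a != 0) s) (hfeas : feasible q (size s)) :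
  drinfeld q b c bs cs u v us vs s
  = \prod_(a <- s) drinfeld q b c bs cs u v us vs [:: a].
Proof. exact: (main_sec hq0 hb hc hbs hcs hq2 huvs hvus hs hfeas). Qed.
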